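(* Let $A^*\in\mathbb C^{N\times n}$ be isometric ($AA^*=I_n$), let $\mathcal X=\mathbb R^n$ or $\mathcal X=\mathbb R^n_+$, let $x_0\in\mathcal X\setminus\{0\}$, $b=|A^*x_0|$, and let $\mathcal F(x)=\big[A\big(b\odot\frac{A^*x}{|A^*x|}\big)\big]_{\mathcal X}$. Suppose $$\tilde\lambda_2:=\max\{\|\Im(B^* )u\|:\ u\in\mathbb R^n,\ \langle u,x_0\rangle=0,\ \|u\|=1\}<1.$$ Then for every $0<\epsilon<1-\tilde\lambda_2^2$ there is a neighborhood of $x_0$ such that for every $x^{(1)}$ in it, the iterates $x^{(k+1)}=\mathcal F^k(x^{(1)})$ satisfy $$\|\alpha^{(k+1)}x^{(k+1)}-x_0\|\le(\tilde\lambda_2^2+\epsilon)\|\alpha^{(k)}x^{(k)}-x_0\|\quad\text{for all }k\ge1,$$ where $\alpha^{(k)}:=\arg\min_{\alpha\in\{\pm1\}}\|\alpha x^{(k)}-x_0\|$, and $\alpha^{(k)}:=1$ if $\mathcal X=\mathbb R^n_+$.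
   Context: $|y|$ is the componentwise modulus, $\odot$ the componentwise product, $y/|y|$ the componentwise quotient with convention $y(j)/|y(j)|=1$ if $y(j)=0$. $[\cdot]_{\mathcal X}$ is Euclidean projection onto $\mathcal X$ (for $\mathcal X=\mathbb R^n$: $x\mapsto\Re x$; for $\mathbb R^n_+$: $x\mapsto\max(\Re x,0)$ componentwise). $B:=A\,\mathrm{diag}\big(\frac{A^*x_0}{|A^*x_0|}\big)$ and $\Im(B^* )$ is its entrywise imaginary part. *)

(* Defs.v *)
From Stdlib Require Import Reals Lra.
Open Scope R_scope.

Definition C : Type := (R * R)%type.
Definition Cre (z : C) : R := fst z.
Definition Cim (z : C) : R := snd z.
Definition CofR (r : R) : C := (r, 0).
Definition C0 : C := (0, 0).
Definition C1 : C := (1, 0).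
Definition Cadd (z w : C) : C := (fst z + fst w, snd z + snd w).
Definition Cmul (z w : C) : C :=
  (fst z * fst w - snd z * snd w, fst z * snd w + snd z * fst w).
Definition Cconj (z : C) : C := (fst z, - snd z).
Definition Cscale (r : R) (z : C) : C := (r * fst z, r * snd z).
Definition Cmod (z : C) : R := sqrt (fst z ^ 2 + snd z ^ 2).
(* z/|z|, with the convention z/|z| = 1 when z = 0 *)
Definition Cphase (z : C) : C :=
  if Req_EM_T (Cmod z) 0 then C1 else Cscale (/ Cmod z) z.

Fixpoint rsum (n : nat) (f : nat -> R) : R :=
  match n with O => 0 | S m => rsum m f + f m end.
Fixpoint csum (n : nat) (f : nat -> C) : C :=
  match n with O => C0 | S m => Cadd (csum m f) (f m) end.

(* ---------- real vectors in R^n (only indices < n matter) ---------- *)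
Definition vec := nat -> R.
Definition vinner (n : nat) (u v : vec) : R := rsum n (fun i => u i * v i).
Definition vnorm (n : nat) (u : vec) : R := sqrt (vinner n u u).
Definition vsub (u v : vec) : vec := fun i => u i - v i.
Definition vscal (a : R) (u : vec) : vec := fun i => a * u i.

(* A i j, i < n (rows), j < N (columns); Astar j i = conj (A i j). *)
Definition cmat := nat -> nat -> C.

Definition isometric (n N : nat) (A : cmat) : Prop :=
  forall i i', (i < n)%nat -> (i' < n)%nat ->
    csum N (fun j => Cmul (A i j) (Cconj (A i' j)))
    = (if Nat.eq_dec i i' then C1 else C0).

Definition Astar_apply (n : nat) (A : cmat) (x : vec) : nat -> C :=
  fun j => csum n (fun i => Cmul (Cconj (A i j)) (CofR (x i))).

Inductive Xkind := Xfull | Xpos .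

Definition inX (X : Xkind) (n : nat) (x : vec) : Prop :=
  match X with
  | Xfull => True
  | Xpos => forall i, (i < n)%nat -> 0 <= x i
  end.

Definition projX (X : Xkind) (y : nat -> C) : vec :=
  match X with
  | Xfull => fun i => Cre (y i)
  | Xpos => fun i => Rmax (Cre (y i)) 0
  end.

Definition bvec (n : nat) (A : cmat) (x0 : vec) : nat -> R :=
  fun j => Cmod (Astar_apply n A x0 j).

Definition Fmap (X : Xkind) (n N : nat) (A : cmat) (x0 : vec) (x : vec) : vec :=
  projX X (fun i => csum N (fun j =>
     Cmul (A i j) (Cscale (bvec n A x0 j) (Cphase (Astar_apply n A x j))))).

(* B = A diag(Astar x0 / |Astar x0|) *)
Definition Bmat (n : nat) (A : cmat) (x0 : vec) : cmat :=
  fun i j => Cmul (A i j) (Cphase (Astar_apply n A x0 j)).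

(* || Im(Bstar) u ||, with Im(Bstar) the real N x n matrix, entry (j,i) = Im(conj(B i j)) *)
Definition ImBstar_norm (n N : nat) (A : cmat) (x0 : vec) (u : vec) : R :=
  sqrt (rsum N (fun j =>
    (rsum n (fun i => Cim (Cconj (Bmat n A x0 i j)) * u i)) ^ 2)).

Definition is_lambda2 (n N : nat) (A : cmat) (x0 : vec) (lam2 : R) : Prop :=
  (exists u : vec, vinner n u x0 = 0 /\ vnorm n u = 1 /\
                   ImBstar_norm n N A x0 u = lam2) /\
  (forall u : vec, vinner n u x0 = 0 -> vnorm n u = 1 ->
                   ImBstar_norm n N A x0 u <= lam2).

Definition alpha (X : Xkind) (n : nat) (x0 x : vec) : R :=
  match X with
  | Xpos => 1
  | Xfull =>
      if Rle_dec (vnorm n (vsub x x0)) (vnorm n (vsub (vscal (-1) x) x0))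
      then 1 else -1
  end.

(* Main.v *)
Require Import Defs.
From Stdlib Require Import Reals Lra Lia Psatz.
Open Scope R_scope.

Lemma rsum_ext n f g : (forall i, (i < n)%nat -> f i = g i) -> rsum n f = rsum n g.
Proof.
  induction n; intros H; simpl; [reflexivity|].
  rewrite IHn by (intros; apply H; lia). rewrite H by lia. reflexivity.
Qed.

Lemma rsum_plus n f g : rsum n (fun i => f i + g i) = rsum n f + rsum n g.
Proof. induction n; cbn [rsum]; [ring|rewrite IHn; ring]. Qed.
Lemma rsum_minus n f g : rsum n (fun i => f i - g i) = rsum n f - rsum n g.
Proof. induction n; cbn [rsum]; [ring|rewrite IHn; ring]. Qed.
Lemma rsum_scal n c f : rsum n (fun i => c * f i) = c * rsum n f.
Proof. induction n; cbn [rsum]; [ring|rewrite IHn; ring]. Qed.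
Lemma rsum_zero n : rsum n (fun _ => 0) = 0.
Proof. induction n; cbn [rsum]; [ring|rewrite IHn; ring]. Qed.
Lemma rsum_lin2 n f g a b : rsum n (fun i => a * f i + b * g i) = a * rsum n f + b * rsum n g.
Proof. induction n; cbn [rsum]; [ring|rewrite IHn; ring]. Qed.

Lemma rsum_le n f g : (forall i, (i<n)%nat -> f i <= g i) -> rsum n f <= rsum n g.
Proof.
  induction n; intros H; simpl; [lra|].
  assert (rsum n f <= rsum n g) by (apply IHn; intros; apply H; lia).
  assert (f n <= g n) by (apply H; lia). lra.
Qed.

Lemma rsum_nonneg n f : (forall i, (i<n)%nat -> 0 <= f i) -> 0 <= rsum n f.
Proof. intros H. rewrite <- (rsum_zero n). apply rsum_le. auto. Qed.

Lemma rsum_term_le n f j : (forall i, (i<n)%nat -> 0 <= f i) -> (j < n)%nat -> f j <= rsum n f.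
Proof.
  induction n; intros H Hj; [lia|]. simpl.
  assert (0 <= rsum n f) by (apply rsum_nonneg; intros; apply H; lia).
  destruct (Nat.eq_dec j n).
  - subst. lra.
  - assert (f j <= rsum n f) by (apply IHn; [intros; apply H; lia | lia]).
    assert (0 <= f n) by (apply H; lia). lra.
Qed.

Lemma rsum_swap n m (F : nat -> nat -> R) :
  rsum n (fun i => rsum m (fun j => F i j)) = rsum m (fun j => rsum n (fun i => F i j)).
Proof.
  induction n; simpl.
  - rewrite rsum_zero. reflexivity.
  - rewrite rsum_plus, IHn. reflexivity.
Qed.

Lemma rsum_delta n i (y : nat -> R) : (i < n)%nat ->
  rsum n (fun i' => (if Nat.eq_dec i i' then 1 else 0) * y i') = y i.
Proof.
  induction n; intros Hi; [lia|]. simpl.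
  destruct (Nat.eq_dec i n).
  - subst. rewrite (rsum_ext n _ (fun _ => 0)).
    + rewrite rsum_zero. ring.
    + intros i' Hi'. destruct (Nat.eq_dec n i'); [lia|ring].
  - rewrite IHn by lia. ring.
Qed.

Lemma rsum_expand_sq n (f g : nat -> R) t :
  rsum n (fun j => (f j - t * g j) ^ 2) =
  rsum n (fun j => f j ^ 2) - 2 * t * rsum n (fun j => f j * g j) + t ^ 2 * rsum n (fun j => g j ^ 2).
Proof. induction n; cbn [rsum]; [ring|rewrite IHn; ring]. Qed.

Lemma CS n f g : rsum n (fun j => f j * g j) <=
  sqrt (rsum n (fun j => f j ^ 2)) * sqrt (rsum n (fun j => g j ^ 2)).
Proof.
  set (F := rsum n (fun j => f j ^ 2)). set (G := rsum n (fun j => g j ^ 2)).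
  set (H := rsum n (fun j => f j * g j)).
  assert (Hq : forall t, 0 <= F - 2 * t * H + t ^ 2 * G).
  { intros t. unfold F, G, H. rewrite <- (rsum_expand_sq n f g t). apply rsum_nonneg. intros. apply pow2_ge_0. }
  assert (HF : 0 <= F) by (apply rsum_nonneg; intros; apply pow2_ge_0).
  assert (HG : 0 <= G) by (apply rsum_nonneg; intros; apply pow2_ge_0).
  destruct (Rle_dec H 0).
  { pose proof (sqrt_pos F). pose proof (sqrt_pos G). nra. }
  assert (H2 : H ^ 2 <= F * G).
  { destruct (Req_dec G 0) as [G0|G0].
    - specialize (Hq ((F + 1) / (2 * H))). rewrite G0 in Hq.
      assert (HH : 2 * ((F + 1) / (2 * H)) * H = F + 1) by (field; lra). rewrite HH in Hq. lra.
    - specialize (Hq (H / G)).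
      assert (F - 2 * (H / G) * H + (H / G) ^ 2 * G = (F * G - H ^ 2) / G) by (field; lra).
      rewrite H0 in Hq.
      assert (0 <= (F * G - H^2) / G * G) by (apply Rmult_le_pos; lra).
      assert ((F * G - H^2) / G * G = F * G - H ^ 2) by (field; lra). lra. }
  rewrite <- sqrt_mult by lra. rewrite <- (sqrt_pow2 H) by lra.
  apply sqrt_le_1_alt. lra.
Qed.

Lemma rsum_double n (h : nat -> R) : rsum (2 * n) h = rsum n (fun j => h (2 * j)%nat + h (S (2 * j))).
Proof.
  induction n; [reflexivity|].
  replace (2 * S n)%nat with (S (S (2 * n))) by lia. cbn [rsum]. rewrite IHn. ring.
Qed.

Lemma CS2 n f1 g1 f2 g2 : rsum n (fun j => f1 j * g1 j + f2 j * g2 j) <=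
  sqrt (rsum n (fun j => f1 j ^ 2 + f2 j ^ 2)) * sqrt (rsum n (fun j => g1 j ^ 2 + g2 j ^ 2)).
Proof.
  pose proof (CS (2 * n) (fun k => if Nat.even k then f1 (Nat.div2 k) else f2 (Nat.div2 k))
                         (fun k => if Nat.even k then g1 (Nat.div2 k) else g2 (Nat.div2 k))) as H.
  assert (E := rsum_double n).
  rewrite !E in H.
  assert (Ev : forall j, Nat.even (2 * j) = true) by (intros; apply Nat.even_mul).
  assert (Od : forall j, Nat.even (S (2 * j)) = false).
  { intros. rewrite Nat.even_succ, <- Nat.negb_even, Ev. reflexivity. }
  assert (D1 : forall j, Nat.div2 (2 * j) = j) by (intros; apply Nat.div2_double).
  assert (D2 : forall j, Nat.div2 (S (2 * j)) = j) by (intros; apply Nat.div2_succ_double).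
  eapply Rle_trans; [apply Req_le|eapply Rle_trans; [exact H| apply Req_le]].
  - apply rsum_ext; intros; rewrite Ev, Od, D1, D2; reflexivity.
  - f_equal; f_equal; apply rsum_ext; intros; rewrite Ev, Od, D1, D2; reflexivity.
Qed.

Lemma Cphase_pos z : Cmod z <> 0 -> Cphase z = (fst z / Cmod z, snd z / Cmod z).
Proof.
  intros H. unfold Cphase. destruct (Req_EM_T (Cmod z) 0); [contradiction|].
  unfold Cscale. f_equal; unfold Rdiv; ring.
Qed.

Lemma Cmod_zero z : Cmod z = 0 -> fst z = 0 /\ snd z = 0.
Proof.
  unfold Cmod. intros H. apply sqrt_eq_0 in H; [|nra]. split; nra.
Qed.

Lemma Cmod_nonneg z : 0 <= Cmod z.
Proof. apply sqrt_pos. Qed.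

Lemma local_rem (z1 z2 d1 d2 : R) :
  let b := Cmod (z1, z2) in 0 < b -> d1^2 + d2^2 <= b^2/4 ->
  let c := z1 / b in let s := z2 / b in
  let q := c * d2 - s * d1 in
  (b * fst (Cphase (z1 + d1, z2 + d2)) - z1 + q * s)^2 +
  (b * snd (Cphase (z1 + d1, z2 + d2)) - z2 - q * c)^2 <= 8 * (d1^2+d2^2)^2 / b^2.
Proof.
  intros b Hb HD c s q.
  assert (Hb2 : b^2 = z1^2 + z2^2).
  { unfold b, Cmod. simpl fst; simpl snd. apply pow2_sqrt. nra. }
  assert (Hz1 : z1 = b * c) by (unfold c; field; lra).
  assert (Hz2 : z2 = b * s) by (unfold s; field; lra).
  clearbody b c s.
  assert (Hcs : c^2 + s^2 = 1).
  { assert (b^2 * (c^2 + s^2 - 1) = 0) by (rewrite Hz1, Hz2 in Hb2; nra).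
    apply Rmult_integral in H. destruct H; [nra|lra]. }
  set (p := c * d1 + s * d2).
  set (D := d1^2 + d2^2).
  assert (HpqD : p^2 + q^2 = D).
  { enough (p^2 + q^2 - D = D * (c^2+s^2 - 1)) by (rewrite Hcs in H; lra).
    unfold p, q, D; ring. }
  set (r := Cmod (z1 + d1, z2 + d2)).
  assert (Hr2 : r^2 = (b + p)^2 + q^2).
  { unfold r, Cmod. simpl fst; simpl snd. rewrite pow2_sqrt by (apply Rplus_le_le_0_compat; apply pow2_ge_0).
    rewrite Hz1, Hz2.
    enough ((b * c + d1) ^ 2 + (b * s + d2) ^ 2 - ((b + p) ^ 2 + q ^ 2)
            = (b^2 - D) * (c^2 + s^2 - 1)) by (rewrite Hcs in H; lra).
    unfold p, q, D. ring. }
  assert (Hp2 : p^2 <= b^2/4) by (assert (0 <= q^2) by apply pow2_ge_0; fold D in HD; lra).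
  assert (Hp : -(b/2) <= p <= b/2) by (split; nra).
  assert (Hrpos : 0 <= r) by apply Cmod_nonneg.
  assert (Hr : 0 < r) by nra.
  assert (Hrbp : b + p <= r) by nra.
  rewrite Cphase_pos by (fold r; lra). fold r. simpl fst; simpl snd.
  assert (Hw1 : z1 + d1 = c * (b + p) - s * q).
  { rewrite Hz1. enough (b * c + d1 - (c * (b + p) - s * q) = d1 * (1 - (c^2+s^2)))
      by (rewrite Hcs in H; lra). unfold p, q; ring. }
  assert (Hw2 : z2 + d2 = s * (b + p) + c * q).
  { rewrite Hz2. enough (b * s + d2 - (s * (b + p) + c * q) = d2 * (1 - (c^2+s^2)))
      by (rewrite Hcs in H; lra). unfold p, q; ring. }
  set (X := b * (b + p) / r - b). set (Y := b * q / r - q).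
  assert (E1 : b * ((z1 + d1) / r) - z1 + q * s = c * X - s * Y).
  { rewrite Hw1. unfold X, Y. rewrite Hz1. field. lra. }
  assert (E2 : b * ((z2 + d2) / r) - z2 - q * c = s * X + c * Y).
  { rewrite Hw2. unfold X, Y. rewrite Hz2. field. lra. }
  rewrite E1, E2.
  assert (ES : (c * X - s * Y) ^ 2 + (s * X + c * Y) ^ 2 = X^2 + Y^2).
  { enough ((c * X - s * Y) ^ 2 + (s * X + c * Y) ^ 2 - (X^2 + Y^2) = (X^2+Y^2) * (c^2+s^2-1))
      by (rewrite Hcs in H; lra). ring. }
  rewrite ES.
  assert (HXr : X * r = b * (b + p - r)) by (unfold X; field; lra).
  assert (HYr : Y * r = q * (b - r)) by (unfold Y; field; lra).
  assert (Hq1 : (r - (b + p)) * (r + (b + p)) = q^2) by nra.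
  assert (Hq2 : b * (r - (b + p)) <= q^2) by nra.
  assert (HX : (X * r)^2 <= q^4).
  { rewrite HXr. assert (0 <= b * (r - (b + p))) by nra. nra. }
  assert (Hbr : (b - r)^2 <= D) by nra.
  assert (HY : (Y * r)^2 <= q^2 * D).
  { rewrite HYr. assert (0 <= q^2) by nra. nra. }
  assert (Hq2D : q^2 <= D) by nra.
  assert (HXY : (X^2 + Y^2) * r^2 <= 2 * D^2) by nra.
  assert (HXY2 : (X^2 + Y^2) * b^2 <= 8 * D^2).
  { assert (0 <= X^2 + Y^2) by nra.
    assert (Hrb : b^2/4 <= r^2) by nra.
    assert (0 <= (X^2+Y^2) * (r^2 - b^2/4)) by (apply Rmult_le_pos; lra). nra. }
  apply (Rmult_le_reg_r (b^2)); [nra|].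
  unfold Rdiv. rewrite Rmult_assoc, Rinv_l by nra. fold D. lra.
Qed.

Definition Pv n (A : cmat) (x : vec) j := rsum n (fun i => fst (A i j) * x i).
Definition Qv n (A : cmat) (x : vec) j := rsum n (fun i => snd (A i j) * x i).

Lemma csum_fst n f : fst (csum n f) = rsum n (fun i => fst (f i)).
Proof. induction n; [reflexivity|]. cbn [csum rsum]. unfold Cadd. cbn [fst]. rewrite IHn. reflexivity. Qed.
Lemma csum_snd n f : snd (csum n f) = rsum n (fun i => snd (f i)).
Proof. induction n; [reflexivity|]. cbn [csum rsum]. unfold Cadd. cbn [snd]. rewrite IHn. reflexivity. Qed.

Lemma Astar_eq n A x j : Astar_apply n A x j = (Pv n A x j, - Qv n A x j).
Proof.
  unfold Astar_apply. rewrite (surjective_pairing (csum _ _)). f_equal.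
  - rewrite csum_fst. apply rsum_ext. intros. unfold Cmul, Cconj, CofR. simpl. ring.
  - rewrite csum_snd. unfold Qv.
    transitivity (rsum n (fun i => -1 * (snd (A i j) * x i))).
    + apply rsum_ext. intros. unfold Cmul, Cconj, CofR. simpl. ring.
    + rewrite rsum_scal. ring.
Qed.

Lemma Pv_sub n A x y j : Pv n A (vsub x y) j = Pv n A x j - Pv n A y j.
Proof. unfold Pv. rewrite <- rsum_minus. apply rsum_ext. intros. unfold vsub. ring. Qed.
Lemma Qv_sub n A x y j : Qv n A (vsub x y) j = Qv n A x j - Qv n A y j.
Proof. unfold Qv. rewrite <- rsum_minus. apply rsum_ext. intros. unfold vsub. ring. Qed.

Lemma iso_real n N A : isometric n N A -> forall i i', (i < n)%nat -> (i' < n)%nat ->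
  rsum N (fun j => fst (A i j) * fst (A i' j) + snd (A i j) * snd (A i' j)) =
  if Nat.eq_dec i i' then 1 else 0.
Proof.
  intros Hiso i i' Hi Hi'. pose proof (Hiso i i' Hi Hi') as H.
  apply (f_equal fst) in H. rewrite csum_fst in H.
  destruct (Nat.eq_dec i i'); simpl in H; rewrite <- H; apply rsum_ext; intros;
    unfold Cmul, Cconj; simpl; ring.
Qed.

Lemma K_id n N A : isometric n N A -> forall (y : vec) i, (i < n)%nat ->
  rsum N (fun j => fst (A i j) * Pv n A y j + snd (A i j) * Qv n A y j) = y i.
Proof.
  intros Hiso y i Hi.
  transitivity (rsum N (fun j => rsum n (fun i' => y i' *
     (fst (A i j) * fst (A i' j) + snd (A i j) * snd (A i' j))))).
  { apply rsum_ext; intros j _. unfold Pv, Qv.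
    rewrite <- (rsum_scal n (fst (A i j))), <- (rsum_scal n (snd (A i j))), <- rsum_plus.
    apply rsum_ext; intros; ring. }
  rewrite rsum_swap.
  transitivity (rsum n (fun i' => (if Nat.eq_dec i i' then 1 else 0) * y i')).
  { apply rsum_ext; intros i' Hi'. rewrite rsum_scal, (iso_real n N A Hiso i i') by auto. ring. }
  apply rsum_delta; auto.
Qed.

Lemma I1 n N A : isometric n N A -> forall y : vec,
  rsum N (fun j => Pv n A y j ^ 2 + Qv n A y j ^ 2) = rsum n (fun i => y i ^ 2).
Proof.
  intros Hiso y.
  transitivity (rsum N (fun j => rsum n (fun i => y i * (fst (A i j) * Pv n A y j + snd (A i j) * Qv n A y j)))).
  { apply rsum_ext; intros j _.
    rewrite (rsum_ext n _ (fun i => Pv n A y j * (fst (A i j) * y i) + Qv n A y j * (snd (A i j) * y i)))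
      by (intros; ring).
    rewrite rsum_plus, !rsum_scal. unfold Pv, Qv. ring. }
  rewrite rsum_swap. apply rsum_ext. intros i Hi. rewrite rsum_scal, K_id by auto. ring.
Qed.

Definition phz n A x0 j := Cphase (Astar_apply n A x0 j).
Definition mm n A x0 j i := Cim (Cconj (Bmat n A x0 i j)).
Definition Mv n A x0 (u : vec) j := rsum n (fun i => mm n A x0 j i * u i).
Definition sj n A x0 j := if Req_EM_T (bvec n A x0 j) 0 then 0 else 1.

Lemma mm_eq n A x0 j i : mm n A x0 j i =
  -(fst (A i j) * snd (phz n A x0 j) + snd (A i j) * fst (phz n A x0 j)).
Proof. unfold mm, Cim, Cconj, Bmat, Cmul, phz. simpl. ring. Qed.

Lemma Mv_eq n A x0 u j : Mv n A x0 u j =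
  -(snd (phz n A x0 j) * Pv n A u j + fst (phz n A x0 j) * Qv n A u j).
Proof.
  unfold Mv, Pv, Qv. rewrite <- rsum_scal, <- rsum_scal, <- rsum_plus.
  transitivity (rsum n (fun i => -1 * (snd (phz n A x0 j) * (fst (A i j) * u i) +
                                      fst (phz n A x0 j) * (snd (A i j) * u i)))).
  - apply rsum_ext. intros. rewrite mm_eq. ring.
  - rewrite rsum_scal. ring.
Qed.

Lemma Mx0 n A x0 j : Mv n A x0 x0 j = 0.
Proof.
  rewrite Mv_eq. unfold phz. rewrite Astar_eq.
  destruct (Req_dec (Cmod (Pv n A x0 j, - Qv n A x0 j)) 0) as [H|H].
  - apply Cmod_zero in H. simpl in H. destruct H as [H1 H2].
    assert (Qv n A x0 j = 0) by lra. rewrite H1, H. ring.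
  - rewrite Cphase_pos by auto. simpl. field. auto.
Qed.

Lemma Mv_sub n A x0 u w j : Mv n A x0 (vsub u w) j = Mv n A x0 u j - Mv n A x0 w j.
Proof. unfold Mv. rewrite <- rsum_minus. apply rsum_ext. intros. unfold vsub. ring. Qed.
Lemma Mv_scal n A x0 a u j : Mv n A x0 (vscal a u) j = a * Mv n A x0 u j.
Proof. unfold Mv. rewrite <- rsum_scal. apply rsum_ext. intros. unfold vscal. ring. Qed.

Lemma vinner_sq n u : vinner n u u = rsum n (fun i => u i ^ 2).
Proof. unfold vinner. apply rsum_ext. intros. ring. Qed.
Lemma vinner_nonneg n u : 0 <= vinner n u u.
Proof. rewrite vinner_sq. apply rsum_nonneg. intros. apply pow2_ge_0. Qed.
Lemma vnorm_sq n u : vnorm n u ^ 2 = vinner n u u.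
Proof. unfold vnorm. apply pow2_sqrt. apply vinner_nonneg. Qed.

Lemma sqrt_scal a X : 0 <= a -> 0 <= X -> sqrt (a ^ 2 * X) = a * sqrt X.
Proof. intros. rewrite sqrt_mult by (try apply pow2_ge_0; auto). rewrite sqrt_pow2 by auto. reflexivity. Qed.

Lemma rsum_sq_scal n a f : rsum n (fun j => (a * f j) ^ 2) = a ^ 2 * rsum n (fun j => f j ^ 2).
Proof. rewrite <- rsum_scal. apply rsum_ext. intros. ring. Qed.

Lemma sqrt_bound Y B : 0 <= Y -> 0 <= B -> Y <= sqrt Y * B -> sqrt Y <= B.
Proof.
  intros HY HB H. rewrite <- (sqrt_sqrt Y HY) in H at 1.
  pose proof (sqrt_pos Y).
  destruct (Req_dec (sqrt Y) 0) as [E|E]; [lra|].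
  apply (Rmult_le_reg_l (sqrt Y)); lra.
Qed.

Lemma lam2_nonneg n N A x0 lam2 : is_lambda2 n N A x0 lam2 -> 0 <= lam2.
Proof. intros [[u [_ [_ H]]] _]. rewrite <- H. apply sqrt_pos. Qed.

Lemma zero_of_sq n (u : vec) : rsum n (fun i => u i ^ 2) = 0 -> forall i, (i < n)%nat -> u i = 0.
Proof.
  intros H i Hi. assert (u i ^ 2 <= 0).
  { rewrite <- H. apply (rsum_term_le n (fun i => u i ^ 2)); auto. intros; apply pow2_ge_0. }
  nra.
Qed.

Lemma hM n N A x0 lam2 : is_lambda2 n N A x0 lam2 -> forall u : vec, vinner n u x0 = 0 ->
  sqrt (rsum N (fun j => Mv n A x0 u j ^ 2)) <= lam2 * vnorm n u.
Proof.
  intros Hl u Hu. pose proof (lam2_nonneg _ _ _ _ _ Hl) as Hl0.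
  destruct Hl as [_ Hmax].
  destruct (Req_dec (vnorm n u) 0) as [H0|H0].
  - assert (Hvv : vinner n u u = 0) by (apply sqrt_eq_0; [apply vinner_nonneg| exact H0]).
    rewrite vinner_sq in Hvv.
    rewrite (rsum_ext N _ (fun _ => 0)).
    + rewrite rsum_zero, sqrt_0, H0. lra.
    + intros j _. unfold Mv. rewrite (rsum_ext n _ (fun _ => 0)).
      * rewrite rsum_zero. ring.
      * intros i Hi. rewrite (zero_of_sq n u Hvv i Hi). ring.
  - set (t := vnorm n u) in *.
    assert (Ht : 0 < t) by (pose proof (sqrt_pos (vinner n u u)); unfold t, vnorm in *; lra).
    set (u' := vscal (/ t) u).
    assert (H1 : vinner n u' x0 = 0).
    { unfold vinner, u', vscal. rewrite (rsum_ext n _ (fun i => / t * (u i * x0 i))) by (intros; ring).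
      rewrite rsum_scal. fold (vinner n u x0). rewrite Hu. ring. }
    assert (H2 : vnorm n u' = 1).
    { unfold vnorm. rewrite !vinner_sq. unfold u', vscal. rewrite rsum_sq_scal.
      rewrite sqrt_scal by (try apply rsum_nonneg; intros; try apply pow2_ge_0;
                            left; apply Rinv_0_lt_compat; lra).
      rewrite <- vinner_sq. fold (vnorm n u). fold t. field. lra. }
    pose proof (Hmax u' H1 H2) as H3. unfold ImBstar_norm in H3.
    change (sqrt (rsum N (fun j => Mv n A x0 u' j ^ 2)) <= lam2) in H3.
    rewrite (rsum_ext N _ (fun j => (/ t * Mv n A x0 u j) ^ 2)) in H3
      by (intros; unfold u'; rewrite Mv_scal; reflexivity).
    rewrite rsum_sq_scal, sqrt_scal in H3 by (try apply rsum_nonneg; intros; try apply pow2_ge_0;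
                            left; apply Rinv_0_lt_compat; lra).
    apply (Rmult_le_compat_r t) in H3; [|lra].
    rewrite Rmult_comm, <- Rmult_assoc, Rinv_r, Rmult_1_l in H3 by lra. lra.
Qed.

Lemma swap_gen n N (h : nat -> R) (F : nat -> nat -> R) (w : vec) :
  rsum n (fun i => rsum N (fun j => h j * F j i) * w i) =
  rsum N (fun j => h j * rsum n (fun i => F j i * w i)).
Proof.
  transitivity (rsum n (fun i => rsum N (fun j => h j * (F j i * w i)))).
  - apply rsum_ext. intros. rewrite Rmult_comm, <- rsum_scal. apply rsum_ext. intros. ring.
  - rewrite rsum_swap. apply rsum_ext. intros. rewrite rsum_scal. reflexivity.
Qed.

Lemma x0_pos n (x0 : vec) : (exists i, (i < n)%nat /\ x0 i <> 0) -> 0 < vinner n x0 x0.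
Proof.
  intros [i [Hi Hx]]. rewrite vinner_sq.
  assert (x0 i ^ 2 <= rsum n (fun i => x0 i ^ 2)).
  { apply (rsum_term_le n (fun i => x0 i ^ 2)); auto. intros; apply pow2_ge_0. }
  assert (0 < x0 i ^ 2) by (simpl; rewrite Rmult_1_r; apply Rsqr_pos_lt; auto). lra.
Qed.

Lemma LIN n N A x0 lam2 : (exists i, (i < n)%nat /\ x0 i <> 0) -> is_lambda2 n N A x0 lam2 ->
  forall e : vec,
  sqrt (rsum n (fun i => (rsum N (fun j => sj n A x0 j * Mv n A x0 e j * mm n A x0 j i)) ^ 2))
  <= lam2 ^ 2 * vnorm n e.
Proof.
  intros Hx0 Hl e. pose proof (lam2_nonneg _ _ _ _ _ Hl) as Hl0.
  pose proof (x0_pos n x0 Hx0) as Hg.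
  set (c0 := vinner n e x0 / vinner n x0 x0).
  set (u := vsub e (vscal c0 x0)).
  assert (HMu : forall j, Mv n A x0 u j = Mv n A x0 e j).
  { intros. unfold u. rewrite Mv_sub, Mv_scal, Mx0. ring. }
  assert (Hux : vinner n u x0 = 0).
  { unfold vinner, u, vsub, vscal.
    rewrite (rsum_ext n _ (fun i => e i * x0 i - c0 * (x0 i * x0 i))) by (intros; ring).
    rewrite rsum_minus, rsum_scal. fold (vinner n e x0). fold (vinner n x0 x0).
    unfold c0. field. lra. }
  assert (Huu : vinner n u u <= vinner n e e).
  { rewrite !vinner_sq. unfold u, vsub, vscal. rewrite rsum_expand_sq.
    rewrite <- !vinner_sq. fold (vinner n e x0).
    assert (E : - 2 * c0 * vinner n e x0 + c0 ^ 2 * vinner n x0 x0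
               = - (vinner n e x0 ^ 2 / vinner n x0 x0)) by (unfold c0; field; lra).
    assert (0 <= vinner n e x0 ^ 2 / vinner n x0 x0).
    { apply Rmult_le_pos; [apply pow2_ge_0|left; apply Rinv_0_lt_compat; lra]. }
    lra. }
  assert (Hq : sqrt (rsum N (fun j => Mv n A x0 e j ^ 2)) <= lam2 * vnorm n e).
  { rewrite (rsum_ext N _ (fun j => Mv n A x0 u j ^ 2)) by (intros; rewrite HMu; reflexivity).
    eapply Rle_trans; [apply (hM n N A x0 lam2 Hl u Hux)|].
    apply Rmult_le_compat_l; [lra|]. apply sqrt_le_1_alt. exact Huu. }
  set (h := fun j => sj n A x0 j * Mv n A x0 e j).
  set (v := fun i => rsum N (fun j => h j * mm n A x0 j i)).
  change (sqrt (rsum n (fun i => v i ^ 2)) <= lam2 ^ 2 * vnorm n e).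
  assert (Hsw : forall w, rsum n (fun i => v i * w i) = rsum N (fun j => h j * Mv n A x0 w j)).
  { intros w. unfold v. rewrite swap_gen. reflexivity. }
  assert (Hvx : vinner n v x0 = 0).
  { unfold vinner. rewrite Hsw. rewrite (rsum_ext N _ (fun _ => 0)).
    - apply rsum_zero.
    - intros. rewrite Mx0. ring. }
  assert (Hh : sqrt (rsum N (fun j => h j ^ 2)) <= sqrt (rsum N (fun j => Mv n A x0 e j ^ 2))).
  { apply sqrt_le_1_alt. apply rsum_le. intros j _. unfold h, sj.
    destruct (Req_EM_T _ _); [|lra]. assert (0 <= Mv n A x0 e j ^ 2) by apply pow2_ge_0. nra. }
  pose proof (hM n N A x0 lam2 Hl v Hvx) as Hv.
  set (VV := rsum n (fun i => v i ^ 2)).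
  assert (HVV : vnorm n v = sqrt VV) by (unfold vnorm; rewrite vinner_sq; reflexivity).
  apply sqrt_bound.
  - apply rsum_nonneg. intros. apply pow2_ge_0.
  - pose proof (sqrt_pos (vinner n e e)). fold (vnorm n e) in H. nra.
  - assert (E1 : VV = rsum N (fun j => h j * Mv n A x0 v j)).
    { unfold VV. rewrite <- Hsw. apply rsum_ext. intros. ring. }
    rewrite E1 at 1. eapply Rle_trans; [apply CS|].
    pose proof (sqrt_pos (rsum N (fun j => h j ^ 2))).
    pose proof (sqrt_pos (rsum N (fun j => Mv n A x0 v j ^ 2))).
    pose proof (sqrt_pos VV).
    rewrite HVV in Hv.
    assert (sqrt (rsum N (fun j => h j ^ 2)) <= lam2 * vnorm n e) by lra.
    pose proof (sqrt_pos (vinner n e e)). fold (vnorm n e) in H3.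
    assert (sqrt (rsum N (fun j => h j ^ 2)) * sqrt (rsum N (fun j => Mv n A x0 v j ^ 2))
            <= (lam2 * vnorm n e) * (lam2 * sqrt VV)).
    { apply Rmult_le_compat; auto. }
    replace (sqrt VV * (lam2 ^ 2 * vnorm n e)) with (lam2 * vnorm n e * (lam2 * sqrt VV)) by ring. exact H4.
Qed.

Definition Gv n N A x0 (x : vec) i :=
  Cre (csum N (fun j => Cmul (A i j) (Cscale (bvec n A x0 j) (Cphase (Astar_apply n A x j))))).
Definition Rem1 n A x0 (x : vec) j :=
  bvec n A x0 j * fst (Cphase (Astar_apply n A x j)) - Pv n A x0 j
  + sj n A x0 j * Mv n A x0 (vsub x x0) j * snd (phz n A x0 j).
Definition Rem2 n A x0 (x : vec) j :=
  bvec n A x0 j * snd (Cphase (Astar_apply n A x j)) + Qv n A x0 j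
  - sj n A x0 j * Mv n A x0 (vsub x x0) j * fst (phz n A x0 j).

Lemma decomp n N A x0 x : isometric n N A -> forall i, (i < n)%nat ->
  Gv n N A x0 x i - x0 i =
  rsum N (fun j => fst (A i j) * Rem1 n A x0 x j - snd (A i j) * Rem2 n A x0 x j)
  + rsum N (fun j => sj n A x0 j * Mv n A x0 (vsub x x0) j * mm n A x0 j i).
Proof.
  intros Hiso i Hi. unfold Gv, Cre. rewrite csum_fst.
  rewrite <- (K_id n N A Hiso x0 i Hi).
  rewrite <- rsum_minus, <- rsum_plus. apply rsum_ext. intros j _.
  rewrite mm_eq. unfold Rem1, Rem2, Cmul, Cscale. simpl. ring.
Qed.

Lemma rem_bound n N A x0 x beta : isometric n N A -> 0 < beta ->
  (forall j, (j < N)%nat -> bvec n A x0 j <> 0 -> beta <= bvec n A x0 j) ->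
  vnorm n (vsub x x0) <= beta / 2 ->
  forall j, (j < N)%nat ->
  Rem1 n A x0 x j ^ 2 + Rem2 n A x0 x j ^ 2 <=
  8 * (Pv n A (vsub x x0) j ^ 2 + Qv n A (vsub x x0) j ^ 2) * vinner n (vsub x x0) (vsub x x0) / beta ^ 2.
Proof.
  intros Hiso Hb Hbeta Hx j Hj.
  set (e := vsub x x0) in *.
  set (D := Pv n A e j ^ 2 + Qv n A e j ^ 2).
  set (E := vinner n e e).
  assert (HD0 : 0 <= D) by (unfold D; pose proof (pow2_ge_0 (Pv n A e j)); pose proof (pow2_ge_0 (Qv n A e j)); lra).
  assert (HDE : D <= E).
  { unfold D, E. rewrite vinner_sq, <- (I1 n N A Hiso e).
    apply (rsum_term_le N (fun j => Pv n A e j ^ 2 + Qv n A e j ^ 2)); auto.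
    intros; pose proof (pow2_ge_0 (Pv n A e i)); pose proof (pow2_ge_0 (Qv n A e i)); lra. }
  assert (HE : E <= beta ^ 2 / 4).
  { unfold E. rewrite <- vnorm_sq. pose proof (sqrt_pos (vinner n e e)). fold (vnorm n e) in H. nra. }
  assert (Hrhs : 0 <= 8 * D * E / beta ^ 2).
  { apply Rmult_le_pos; [|left; apply Rinv_0_lt_compat; nra]. assert (0 <= E) by (unfold E; apply vinner_nonneg). nra. }
  specialize (Hbeta j Hj). unfold bvec in Hbeta. rewrite Astar_eq in Hbeta.
  set (z1 := Pv n A x0 j) in *. set (z2 := - Qv n A x0 j) in *.
  assert (Hbn : 0 <= Cmod (z1, z2)) by apply Cmod_nonneg.
  destruct (Req_dec (Cmod (z1, z2)) 0) as [H0|H0].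
  - assert (Hz := Cmod_zero _ H0). simpl in Hz. destruct Hz as [Hz1 Hz2].
    assert (Hs : sj n A x0 j = 0).
    { unfold sj, bvec. rewrite Astar_eq. fold z1 z2. destruct (Req_EM_T _ _); [reflexivity|contradiction]. }
    unfold Rem1, Rem2, bvec. rewrite (Astar_eq n A x0 j). fold z1 z2. rewrite H0, Hs.
    assert (Qv n A x0 j = 0) by (unfold z2 in Hz2; lra). rewrite H, Hz1.
    match goal with |- ?l <= _ => replace l with 0 by ring end.
    lra.
  - set (b := Cmod (z1, z2)) in *.
    assert (Hbpos : 0 < b) by lra.
    assert (Hbb : beta <= b) by (apply Hbeta; auto).
    assert (Hs : sj n A x0 j = 1).
    { unfold sj, bvec. rewrite Astar_eq. fold z1 z2 b. destruct (Req_EM_T _ _); [contradiction|reflexivity]. }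
    assert (Hph : phz n A x0 j = (z1 / b, z2 / b)).
    { unfold phz. rewrite Astar_eq. fold z1 z2. rewrite Cphase_pos by (fold b; lra). reflexivity. }
    assert (Hw : Astar_apply n A x j = (z1 + Pv n A e j, z2 + - Qv n A e j)).
    { rewrite Astar_eq. unfold e. rewrite Pv_sub, Qv_sub. unfold z1, z2. f_equal; ring. }
    assert (HMe : Mv n A x0 e j = z1 / b * (- Qv n A e j) - z2 / b * Pv n A e j).
    { rewrite Mv_eq, Hph. simpl. ring. }
    pose proof (local_rem z1 z2 (Pv n A e j) (- Qv n A e j)) as LR. cbv zeta in LR. fold b in LR.
    assert (HDb : Pv n A e j ^ 2 + (- Qv n A e j) ^ 2 <= b ^ 2 / 4).
    { replace (Pv n A e j ^ 2 + (- Qv n A e j) ^ 2) with D by (unfold D; ring). nra. }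
    specialize (LR Hbpos HDb).
    unfold Rem1, Rem2. fold e. rewrite Hs, Hw, HMe, Hph. simpl fst; simpl snd.
    fold z1. replace (Qv n A x0 j) with (- z2) by (unfold z2; ring).
    replace (Pv n A e j ^ 2 + (- Qv n A e j) ^ 2) with D in LR by (unfold D; ring).
    eapply Rle_trans; [|eapply Rle_trans; [apply LR|]].
    + apply Req_le. assert (Hbv : bvec n A x0 j = b) by (unfold bvec; rewrite Astar_eq; reflexivity).
      rewrite Hbv. ring.
    + assert (HH : 8 * D ^ 2 * beta ^ 2 <= 8 * D * E * b ^ 2).
      { assert (D * D * beta^2 <= D * E * b^2); [|nra].
        apply Rmult_le_compat; try nra. }
      assert (E1 : 8 * D ^ 2 / b ^ 2 = 8 * D ^ 2 * beta ^ 2 / (b ^ 2 * beta ^ 2)) by (field; lra).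
      assert (E2 : 8 * D * E / beta ^ 2 = 8 * D * E * b ^ 2 / (b ^ 2 * beta ^ 2)) by (field; lra).
      rewrite E1, E2. unfold Rdiv. apply Rmult_le_compat_r; [|exact HH].
      left. apply Rinv_0_lt_compat. apply Rmult_lt_0_compat; apply pow_lt; lra.
Qed.

Lemma step n N A X x0 lam2 beta : isometric n N A -> inX X n x0 ->
  (exists i, (i < n)%nat /\ x0 i <> 0) -> is_lambda2 n N A x0 lam2 -> 0 < beta ->
  (forall j, (j < N)%nat -> bvec n A x0 j <> 0 -> beta <= bvec n A x0 j) ->
  forall x, vnorm n (vsub x x0) <= beta / 2 ->
  vnorm n (vsub (Fmap X n N A x0 x) x0) <=
  lam2 ^ 2 * vnorm n (vsub x x0) + 3 * vnorm n (vsub x x0) ^ 2 / beta.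
Proof.
  intros Hiso HX Hx0 Hl Hb Hbeta x Hx.
  pose proof (lam2_nonneg _ _ _ _ _ Hl) as Hl0.
  set (e := vsub x x0) in *.
  set (g := fun i => Gv n N A x0 x i - x0 i).
  set (Y := rsum n (fun i => g i ^ 2)).
  set (E := vinner n e e).
  assert (HE : E = vnorm n e ^ 2) by (unfold E; rewrite vnorm_sq; reflexivity).
  assert (Hne : 0 <= vnorm n e) by apply sqrt_pos.
  assert (HY0 : 0 <= Y) by (apply rsum_nonneg; intros; apply pow2_ge_0).
  assert (Hproj : vnorm n (vsub (Fmap X n N A x0 x) x0) <= sqrt Y).
  { unfold vnorm. apply sqrt_le_1_alt. rewrite vinner_sq. apply rsum_le. intros i Hi.
    unfold g, vsub, Fmap, Gv. destruct X; simpl projX.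
    - lra.
    - simpl in HX. specialize (HX i Hi).
      set (G := Cre _). unfold Rmax. destruct (Rle_dec G 0); nra. }
  eapply Rle_trans; [exact Hproj|].
  set (RR := rsum N (fun j => Rem1 n A x0 x j ^ 2 + (- Rem2 n A x0 x j) ^ 2)).
  assert (HRR : sqrt RR <= 3 * E / beta).
  { assert (RR <= (3 * E / beta) ^ 2).
    { unfold RR. eapply Rle_trans.
      - apply rsum_le. intros j Hj. replace ((- Rem2 n A x0 x j) ^ 2) with (Rem2 n A x0 x j ^ 2) by ring.
        apply (rem_bound n N A x0 x beta Hiso Hb Hbeta Hx j Hj).
      - fold e E.
        rewrite (rsum_ext N _ (fun j => (8 * E / beta ^ 2) * (Pv n A e j ^ 2 + Qv n A e j ^ 2)))
          by (intros; unfold Rdiv; ring).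
        rewrite rsum_scal, (I1 n N A Hiso e). rewrite <- vinner_sq. fold E.
        assert (0 <= E) by (unfold E; apply vinner_nonneg).
        assert (Eq : (3 * E / beta) ^ 2 = 8 * E / beta ^ 2 * E + (E / beta) ^ 2) by (field; lra).
        rewrite Eq. pose proof (pow2_ge_0 (E / beta)). lra. }
    rewrite <- (sqrt_pow2 (3 * E / beta)).
    - apply sqrt_le_1_alt. auto.
    - assert (0 <= E) by (unfold E; apply vinner_nonneg).
      apply Rmult_le_pos; [lra|left; apply Rinv_0_lt_compat; lra]. }
  set (S1 := fun i => rsum N (fun j => fst (A i j) * Rem1 n A x0 x j - snd (A i j) * Rem2 n A x0 x j)).
  set (v := fun i => rsum N (fun j => sj n A x0 j * Mv n A x0 e j * mm n A x0 j i)).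
  assert (HYs : Y = rsum n (fun i => g i * S1 i) + rsum n (fun i => g i * v i)).
  { rewrite <- rsum_plus. apply rsum_ext. intros i Hi.
    assert (g i = S1 i + v i) by (unfold g, S1, v, e; apply decomp; auto).
    rewrite H. ring. }
  assert (T1 : rsum n (fun i => g i * S1 i) <= sqrt RR * sqrt Y).
  { assert (Eq : rsum n (fun i => g i * S1 i) =
                 rsum N (fun j => Rem1 n A x0 x j * Pv n A g j + (- Rem2 n A x0 x j) * Qv n A g j)).
    { unfold S1.
      transitivity (rsum n (fun i => rsum N (fun j => g i * (fst (A i j) * Rem1 n A x0 x j - snd (A i j) * Rem2 n A x0 x j)))).
      { apply rsum_ext. intros. rewrite <- rsum_scal. reflexivity. }
      rewrite rsum_swap. apply rsum_ext. intros j _. unfold Pv, Qv.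
      rewrite <- !rsum_scal, <- rsum_plus. apply rsum_ext. intros. ring. }
    rewrite Eq. eapply Rle_trans; [apply CS2|]. fold RR.
    rewrite (I1 n N A Hiso g). apply Req_le. reflexivity. }
  assert (T2 : rsum n (fun i => g i * v i) <= sqrt Y * (lam2 ^ 2 * vnorm n e)).
  { eapply Rle_trans; [apply CS|]. fold Y.
    apply Rmult_le_compat_l; [apply sqrt_pos|]. apply LIN; auto. }
  rewrite HE in HRR.
  apply sqrt_bound; auto.
  - assert (0 <= 3 * vnorm n e ^ 2 / beta).
    { apply Rmult_le_pos; [nra|left; apply Rinv_0_lt_compat; lra]. }
    nra.
  - pose proof (sqrt_pos Y). pose proof (sqrt_pos RR).
    assert (sqrt RR * sqrt Y <= 3 * vnorm n e ^ 2 / beta * sqrt Y) by (apply Rmult_le_compat_r; lra).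
    nra.
Qed.

Lemma beta_exists (b : nat -> R) N : (forall j, 0 <= b j) ->
  exists beta, 0 < beta /\ forall j, (j < N)%nat -> b j <> 0 -> beta <= b j.
Proof.
  intros Hb. induction N.
  - exists 1. split; [lra|]. intros; lia.
  - destruct IHN as [beta [Hbp Hbj]].
    destruct (Req_dec (b N) 0) as [H0|H0].
    + exists beta. split; auto. intros j Hj Hn.
      destruct (Nat.eq_dec j N); [subst; contradiction|]. apply Hbj; auto; lia.
    + exists (Rmin beta (b N)). split.
      * apply Rmin_pos; auto. specialize (Hb N). lra.
      * intros j Hj Hn. destruct (Nat.eq_dec j N).
        -- subst. apply Rmin_r.
        -- eapply Rle_trans; [apply Rmin_l|]. apply Hbj; auto; lia.
Qed.

Lemma sum_neg_sq n (x x0 : vec) :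
  rsum n (fun i => (-1 * x i - x0 i) * (-1 * x i - x0 i)) =
  rsum n (fun i => (x i - x0 i) * (x i - x0 i)) + 4 * rsum n (fun i => x i * x0 i).
Proof. induction n; cbn [rsum]; [ring|rewrite IHn; ring]. Qed.

Lemma sum_split_x n (x x0 : vec) :
  rsum n (fun i => x i * x0 i) = rsum n (fun i => (x i - x0 i) * x0 i) + rsum n (fun i => x0 i * x0 i).
Proof. induction n; cbn [rsum]; [ring|rewrite IHn; ring]. Qed.

Lemma alpha_one X n (x0 x : vec) : vnorm n (vsub x x0) < vnorm n x0 -> alpha X n x0 x = 1.
Proof.
  intros H. destruct X; [|reflexivity]. simpl.
  destruct (Rle_dec _ _) as [|Hn]; [reflexivity|]. exfalso. apply Hn.
  unfold vnorm. apply sqrt_le_1_alt. unfold vinner, vsub, vscal.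
  rewrite sum_neg_sq.
  enough (0 <= rsum n (fun i => x i * x0 i)) by lra.
  rewrite sum_split_x.
  pose proof (CS n (fun i => - (x i - x0 i)) x0) as Hcs. cbv beta in Hcs.
  rewrite (rsum_ext n (fun j => (- (x j - x0 j)) ^ 2) (fun i => vsub x x0 i * vsub x x0 i)) in Hcs
    by (intros; unfold vsub; ring).
  rewrite (rsum_ext n (fun j => x0 j ^ 2) (fun i => x0 i * x0 i)) in Hcs by (intros; ring).
  fold (vinner n (vsub x x0) (vsub x x0)) (vinner n x0 x0) in Hcs.
  fold (vnorm n (vsub x x0)) (vnorm n x0) in Hcs.
  rewrite (rsum_ext n (fun j => - (x j - x0 j) * x0 j) (fun j => -1 * ((x j - x0 j) * x0 j))) in Hcs
    by (intros; ring).
  rewrite rsum_scal in Hcs.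
  assert (Hx0 : rsum n (fun i => x0 i * x0 i) = vnorm n x0 ^ 2) by (rewrite vnorm_sq; reflexivity).
  rewrite Hx0. pose proof (sqrt_pos (vinner n (vsub x x0) (vsub x x0))). fold (vnorm n (vsub x x0)) in H0.
  nra.
Qed.

Lemma vscal1 n x x0 : vnorm n (vsub (vscal 1 x) x0) = vnorm n (vsub x x0).
Proof. unfold vnorm, vinner, vsub, vscal. f_equal. apply rsum_ext. intros. ring. Qed.

Theorem mainTheorem11 (n N : nat) (A : cmat) (X : Xkind) (x0 : vec) (lam2 : R) :
  isometric n N A ->
  inX X n x0 ->
  (exists i, (i < n)%nat /\ x0 i <> 0) ->
  is_lambda2 n N A x0 lam2 ->
  lam2 < 1 ->
  forall eps : R, 0 < eps -> eps < 1 - lam2 ^ 2 ->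
  exists delta : R, 0 < delta /\
    forall x1 : vec, inX X n x1 -> vnorm n (vsub x1 x0) < delta ->
      forall k : nat,
        let xk := Nat.iter k (Fmap X n N A x0) x1 in
        let xk1 := Nat.iter (S k) (Fmap X n N A x0) x1 in
        vnorm n (vsub (vscal (alpha X n x0 xk1) xk1) x0)
        <= (lam2 ^ 2 + eps) * vnorm n (vsub (vscal (alpha X n x0 xk) xk) x0).
Proof.
  intros Hiso HX Hx0 Hl Hlam eps Heps Heps2.
  pose proof (lam2_nonneg _ _ _ _ _ Hl) as Hl0.
  destruct (beta_exists (bvec n A x0) N) as [beta [Hb Hbeta]].
  { intros. apply Cmod_nonneg. }
  assert (Hnx0 : 0 < vnorm n x0) by (apply sqrt_lt_R0; apply x0_pos; auto).
  set (delta := Rmin (beta / 2) (Rmin (vnorm n x0) (eps * beta / 3))).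
  assert (Hd1 : delta <= beta / 2) by apply Rmin_l.
  assert (Hd2 : delta <= vnorm n x0) by (eapply Rle_trans; [apply Rmin_r|apply Rmin_l]).
  assert (Hd3 : delta <= eps * beta / 3) by (eapply Rle_trans; [apply Rmin_r|apply Rmin_r]).
  assert (Hd : 0 < delta).
  { apply Rmin_pos; [lra|apply Rmin_pos; [lra|]]. apply Rmult_lt_0_compat; [nra|lra]. }
  exists delta. split; auto.
  intros x1 _ Hx1.
  set (F := Fmap X n N A x0).
  assert (Hstep : forall x, vnorm n (vsub x x0) < delta ->
            vnorm n (vsub (F x) x0) <= (lam2 ^ 2 + eps) * vnorm n (vsub x x0)).
  { intros x Hx. set (t := vnorm n (vsub x x0)) in *.
    assert (Ht : 0 <= t) by apply sqrt_pos.
    eapply Rle_trans; [apply (step n N A X x0 lam2 beta Hiso HX Hx0 Hl Hb Hbeta x); fold t; lra|].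
    fold t.
    assert (3 * t ^ 2 / beta <= eps * t).
    { assert (3 * t / beta <= eps).
      { apply (Rmult_le_reg_r (beta / 3)); [lra|].
        replace (3 * t / beta * (beta / 3)) with t by (field; lra). lra. }
      replace (3 * t ^ 2 / beta) with (t * (3 * t / beta)) by (field; lra). nra. }
    lra. }
  assert (Hall : forall k, vnorm n (vsub (Nat.iter k F x1) x0) < delta).
  { induction k; [exact Hx1|].
    change (Nat.iter (S k) F x1) with (F (Nat.iter k F x1)).
    pose proof (Hstep _ IHk). pose proof (sqrt_pos (vinner n (vsub (Nat.iter k F x1) x0) (vsub (Nat.iter k F x1) x0))).
    fold (vnorm n (vsub (Nat.iter k F x1) x0)) in H0.
    assert (lam2 ^ 2 + eps <= 1) by lra. nra. }
  intros k xk xk1.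
  assert (Hk := Hall k). assert (Hk1 := Hall (S k)).
  fold F in xk, xk1.
  rewrite (alpha_one X n x0 xk) by (unfold xk; lra).
  rewrite (alpha_one X n x0 xk1) by (unfold xk1; lra).
  rewrite !vscal1. unfold xk1, xk. apply Hstep. exact Hk.
Qed.
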